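(* Claimwise stability does not imply ex-post stability or fractional stability: there exist a set $N$ of $n$ agents and a set $O$ of $n$ objects with strict preferences $\succ_i$ over $O$ ($i\in N$) and strict priorities $\succ_o$ over $N$ ($o\in O$), and a random matching $p$, such that $p$ is claimwise stable but neither ex-post stable nor fractionally stable.
   Context: A random matching is an $n\times n$ bistochastic matrix $p=[p(i,o)]_{i\in N,o\in O}$ (nonnegative entries, every row and every column summing to $1$); it is deterministic if all entries lie in $\{0,1\}$. A deterministic matching $p$ is stable if there exist no $i,j\in N$, $o,o'\in O$ with $p(i,o')=1$, $p(j,o)=1$, $o\succ_i o'$, $i\succ_o j$. A random matching is ex-post stable if it can be written as $\sum_{j=1}^k\lambda_jP_j$ with each $P_j$ a stable deterministic matching, $\lambda_j\in(0,1]$, $\sum_j\lambda_j=1$. It is fractionally stable if for every $(i,o)\in N\times O$, $\sum_{o':o'\succ_i o}p(i,o')\ge\sum_{j:i\succ_o j}p(j,o)$. It is claimwise stable if for every $(i,o)\in N\times O$ and every $j\in N$ with $i\succ_o j$, $\sum_{o':o'\succ_i o}p(i,o')\ge p(j,o)$. *)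

(* Defs.v *)
(* Agents N = 'I_n, objects O = 'I_n (two separate roles).
   A random matching is a matrix p : 'M[R]_n with p i o = p(i,o),
   rows indexed by agents, columns by objects. *)
From HB Require Import structures.
From mathcomp Require Import all_boot all_order all_algebra.
From mathcomp Require Import reals.
Set Implicit Arguments. Unset Strict Implicit. Unset Printing Implicit Defensive.
Import Order.TTheory GRing.Theory Num.Theory.
Local Open Scope ring_scope.

(* A strict (linear) order on a finite type: r x y reads "x is strictly
   preferred to y". *)
Definition strict_linear_order (T : finType) (r : rel T) : Prop :=
  irreflexive r /\ transitive r /\ (forall x y, x != y -> r x y || r y x).

Section Matching.
Variables (R : realType) (n : nat).
Variable pref : 'I_n -> rel 'I_n.  (* pref i o o' : o >_i o' *)
Variable prio : 'I_n -> rel 'I_n.  (* prio o i j  : i >_o j  *)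

Definition bistochastic (p : 'M[R]_n) : Prop :=
  (forall i o, 0 <= p i o) /\
  (forall i, \sum_(o < n) p i o = 1) /\
  (forall o, \sum_(i < n) p i o = 1).

Definition deterministic (p : 'M[R]_n) : Prop :=
  bistochastic p /\ (forall i o, p i o = 0 \/ p i o = 1).

Definition stable_det (p : 'M[R]_n) : Prop :=
  deterministic p /\
  ~ (exists i j o o', [/\ p i o' = 1, p j o = 1, pref i o o' & prio o i j]).

Definition ex_post_stable (p : 'M[R]_n) : Prop :=
  exists (k : nat) (lam : 'I_k -> R) (P : 'I_k -> 'M[R]_n),
    [/\ forall j, stable_det (P j),
        forall j, 0 < lam j <= 1,
        \sum_(j < k) lam j = 1
      & p = \sum_(j < k) lam j *: P j].

Definition fractionally_stable (p : 'M[R]_n) : Prop :=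
  forall i o,
    \sum_(o' < n | pref i o' o) p i o' >= \sum_(j < n | prio o i j) p j o.

Definition claimwise_stable (p : 'M[R]_n) : Prop :=
  forall i o j, prio o i j -> \sum_(o' < n | pref i o' o) p i o' >= p j o.

End Matching.

(* Main.v *)
Require Import Defs.
From HB Require Import structures.
From mathcomp Require Import all_boot all_order all_algebra.
From mathcomp Require Import reals.
From mathcomp Require Import lra.
Set Implicit Arguments. Unset Strict Implicit. Unset Printing Implicit Defensive.
Import Order.TTheory GRing.Theory Num.Theory.
Local Open Scope ring_scope.

Lemma det_frac (R : realType) n (pref prio : 'I_n -> rel 'I_n) (P : 'M[R]_n) :
  (forall i, strict_linear_order (pref i)) ->
  (forall o, strict_linear_order (prio o)) ->
  stable_det pref prio P -> fractionally_stable pref prio P.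
Proof.
move=> hpref hprio [[[P0 [Pr Pc]] P01] nst] i o.
have colle : \sum_(j | prio o i j) P j o <= 1.
  by rewrite -(Pc o) [X in _ <= X](bigID (prio o i)) /= lerDl sumr_ge0.
have [z|nz] := eqVneq (\sum_(j | prio o i j) P j o) 0.
  by rewrite z sumr_ge0.
case: (pickP (fun j => prio o i j && (P j o != 0))) => [j /andP[hj Pj]|none]; last first.
  case/eqP: nz; apply: big1 => j hj; have := none j; rewrite hj /=.
  by move/negbFE/eqP.
have Pj1 : P j o = 1 by case: (P01 j o) => // h; rewrite h eqxx in Pj.
case: (pickP (fun o' => P i o' == 1)) => [o' /eqP Pio'|none]; last first.
  have : \sum_(o' < n) P i o' = 0.
    apply: big1 => o' _; case: (P01 i o') => // h; have := none o'.
    by rewrite h eqxx.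
  by rewrite Pr => /eqP; rewrite oner_eq0.
have ji : j != i.
  apply/eqP => e; move: hj; rewrite e; have [irr _] := hprio o; by rewrite irr.
have oo : o' != o.
  apply/eqP => e; rewrite e in Pio'.
  have := Pc o; rewrite (bigD1 i) //= (bigD1 j) //=.
  have : 0 <= \sum_(i0 < n | (i0 != i) && (i0 != j)) P i0 o by apply: sumr_ge0.
  rewrite Pio' Pj1; lra.
have hp : pref i o' o.
  have [_ [_ tot]] := hpref i.
  case/orP: (tot _ _ oo) => // h; exfalso; apply: nst.
  by exists i, j, o, o'; split.
apply: (le_trans colle).
rewrite (bigD1 o') //= Pio' lerDl sumr_ge0 //.
Qed.

Lemma expost_frac (R : realType) n (pref prio : 'I_n -> rel 'I_n) (p : 'M[R]_n) :
  (forall i, strict_linear_order (pref i)) ->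
  (forall o, strict_linear_order (prio o)) ->
  ex_post_stable pref prio p -> fractionally_stable pref prio p.
Proof.
move=> hpref hprio [k [lam [P [hs hl _ ->]]]] i o.
have E : forall a b, (\sum_(j < k) lam j *: P j) a b = \sum_(j < k) lam j * P j a b.
  by move=> a b; rewrite summxE; apply: eq_bigr => j _; rewrite mxE.
under eq_bigr do rewrite E.
under [X in _ <= X]eq_bigr do rewrite E.
rewrite exchange_big [X in _ <= X]exchange_big /=.
apply: ler_sum => j _; rewrite -!mulr_sumr.
have [l0 _] := andP (hl j).
apply: ler_wpM2l; first exact: ltW.
exact: (det_frac hpref hprio (hs j) i o).
Qed.

Definition rkA (i o : nat) : nat :=
  match i, o with
  | 0, 0 => 1 | 0, 1 => 2 | 0, _ => 0
  | 1, 0 => 1 | 1, 1 => 0 | 1, _ => 2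
  | _, 0 => 0 | _, 1 => 2 | _, _ => 1
  end.
Definition rkO (o i : nat) : nat :=
  match o, i with
  | 0, 0 => 0 | 0, 1 => 1 | 0, _ => 2
  | 1, 0 => 0 | 1, 1 => 2 | 1, _ => 1
  | _, 0 => 2 | _, 1 => 0 | _, _ => 1
  end.
Definition cc (i o : nat) : nat :=
  match i, o with
  | 0, 0 => 0 | 0, _ => 1
  | 1, 2 => 0 | 1, _ => 1
  | _, 1 => 0 | _, _ => 1
  end.

Definition prefE : 'I_3 -> rel 'I_3 :=
  fun i o o' => (rkA i o < rkA i o')%N.
Definition prioE : 'I_3 -> rel 'I_3 :=
  fun o i j => (rkO o i < rkO o j)%N.
Definition pE (R : realType) : 'M[R]_3 := \matrix_(i, o) ((cc i o)%:R / 2%:R).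

Lemma sum3 (R : realType) (P : pred 'I_3) (F : 'I_3 -> R) :
  \sum_(o < 3 | P o) F o =
  (if P 0 then F 0 else 0) + (if P 1 then F 1 else 0) + (if P 2 then F 2 else 0).
Proof.
rewrite big_mkcond !big_ord_recr big_ord0 /= add0r.
by congr (_ + _ + _); congr (if P _ then F _ else _); apply: val_inj.
Qed.

Lemma slo (rk : nat -> nat -> nat) (k : nat) :
  (forall x y : 'I_3, x != y -> rk k x != rk k y) ->
  strict_linear_order (fun x y : 'I_3 => (rk k x < rk k y)%N).
Proof.
move=> inj; split; first by move=> x; rewrite ltnn.
split; first by move=> x y z; apply: ltn_trans.
move=> x y /inj; rewrite neq_ltn.
done.
Qed.

Lemma ord3 (Q : 'I_3 -> Prop) : Q 0 -> Q 1 -> Q 2 -> forall x, Q x.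
Proof.
move=> h0 h1 h2 [[|[|[|//]]] h].
- by have -> : Ordinal h = 0 by apply: val_inj.
- by have -> : Ordinal h = 1 by apply: val_inj.
- by have -> : Ordinal h = 2 by apply: val_inj.
Qed.

Theorem proposition10 (R : realType) :
  exists (n : nat) (pref : 'I_n -> rel 'I_n) (prio : 'I_n -> rel 'I_n)
         (p : 'M[R]_n),
    [/\ forall i, strict_linear_order (pref i),
        forall o, strict_linear_order (prio o),
        bistochastic p,
        claimwise_stable pref prio p
      & ~ ex_post_stable pref prio p /\ ~ fractionally_stable pref prio p].
Proof.
have hpref : forall i, strict_linear_order (prefE i).
  move=> i; apply: slo => x y; case: i => [[|[|[|//]]] ?];
    case: x => [[|[|[|//]]] ?]; case: y => [[|[|[|//]]] ?] //.
have hprio : forall i, strict_linear_order (prioE i).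
  move=> i; apply: slo => x y; case: i => [[|[|[|//]]] ?];
    case: x => [[|[|[|//]]] ?]; case: y => [[|[|[|//]]] ?] //.
have nf : ~ fractionally_stable prefE prioE (pE R).
  move=> /(_ 0 0); rewrite !sum3 /= !mxE /=; lra.
exists 3, prefE, prioE, (pE R); split => //.
- split; first by move=> i o; rewrite mxE; apply: divr_ge0; apply: ler0n.
  split.
    by apply: ord3; rewrite sum3 /= !mxE /=; lra.
  by apply: ord3; rewrite sum3 /= !mxE /=; lra.
- move=> i o j; case: i => [[|[|[|//]]] ?]; case: o => [[|[|[|//]]] ?];
    case: j => [[|[|[|//]]] ?]; rewrite /prioE /= => // _; rewrite sum3 /= !mxE /=; lra.
- by split => //; move/expost_frac => /(_ hpref hprio).
Qed.
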